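(* For all integers $a,b,l\ge0$, $$\sum_{\tau\in P(a,b)}(-1)^{|\hat\tau|}\,s_{(\tau+l-b)\cup(\hat\tau+l)}=\binom{a+b}{a}\,s_{(l^{a+b})}\quad\text{in }\operatorname{Sym}_{a+b},$$ where $\tau+l-b=(\tau_1+l-b,\dots,\tau_a+l-b)\in\mathbb Z^a$ and $\hat\tau+l=(\hat\tau_1+l,\dots,\hat\tau_b+l)\in\mathbb Z^b$. Equivalently, in terms of the wedge product, $\sum_{\tau\in P(a,b)}(-1)^{|\hat\tau|}\wedge_{a,b}(s_{l^a}s_\tau, s_{\hat\tau}s_{l^b})=\binom{a+b}{a}s_{(l^{a+b})}$.
   Context: $\operatorname{Sym}_k=\mathbb Z[x_1,\dots,x_k]^{S_k}$. $P(a,b)$ is the set of partitions $\lambda=(\lambda_1\ge\dots\ge\lambda_a\ge0)$ with at most $a$ parts and $\lambda_1\le b$; $|\lambda|=\sum\lambda_i$. For $\lambda\in P(a,b)$, the complementary partition is $\lambda^c=(b-\lambda_a,\dots,b-\lambda_1)$, the conjugate $\lambda^t$ has $\lambda^t_j=\#\{i:\lambda_i\ge j\}$, and $\hat\lambda=(\lambda^c)^t\in P(b,a)$ (regarded as a length-$b$ sequence padded with zeros). $(l^k)$ denotes $(l,\dots,l)$ ($k$ entries). For $\mu\in\mathbb Z^k$ with $\mu_j\ge j-k$, $s_\mu=\det(x_i^{\mu_j+k-j})_{1\le i,j\le k}/\det(x_i^{k-j})_{1\le i,j\le k}$; for $\lambda\in\mathbb Z^a,\mu\in\mathbb Z^b$,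 $\lambda\cup\mu=(\lambda_1,\dots,\lambda_a,\mu_1,\dots,\mu_b)$. The wedge product is $\wedge_{a,b}(s_\lambda,s_\mu)=s_{(\lambda-b)\cup\mu}$ for $\lambda\in P(a)$, $\mu\in P(b)$, extended bilinearly. *)

(* Defs.v *)
From HB Require Import structures.
From mathcomp Require Import all_boot all_order all_algebra.
Unset Strict Implicit. Unset Printing Implicit Defensive.
Import Order.TTheory GRing.Theory Num.Theory.
Local Open Scope ring_scope.

(* Polynomial ring Z[x_0,...,x_{k-1}] as an iterated univariate polynomial ring. *)
Fixpoint MP (k : nat) : idomainType :=
  match k with
  | 0 => int
  | k'.+1 => ({poly MP k'} : idomainType)
  end.

(* The variable x_i of Z[x_0,...,x_{k-1}] (meaningful for i < k). *)
Fixpoint mvar (k : nat) : nat -> MP k :=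
  match k return nat -> MP k with
  | 0 => fun _ => 0
  | k'.+1 => fun i => if i == k' then ('X : {poly MP k'}) else (mvar k' i)%:P
  end.

(* Fraction field of Z[x_0,...,x_{k-1}], where the ratio of determinants lives. *)
Definition FF (k : nat) : fieldType := {fraction MP k}.

Definition fvar (k : nat) (i : 'I_k) : FF k := tofrac (mvar k i).

(* s_mu = det(x_i^(mu_j + k - j)) / det(x_i^(k - j)),  (0-indexed: k-1-j). *)
Definition schur (k : nat) (mu : 'I_k -> int) : FF k :=
  \det (\matrix_(i < k, j < k) fvar k i ^ (mu j + (k.-1 - j)%N%:Z))
  / \det (\matrix_(i < k, j < k) fvar k i ^+ (k.-1 - j)).

(* P(a,b): partitions with at most a parts and parts <= b, as nonincreasing
   functions 'I_a -> 'I_b.+1. *)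
Definition inP (a b : nat) (t : {ffun 'I_a -> 'I_b.+1}) : bool :=
  [forall i : 'I_a, forall j : 'I_a, (i <= j)%N ==> (t j <= t i)%N].

Definition pcompl (a b : nat) (t : 'I_a -> nat) : 'I_a -> nat :=
  fun i => (b - t (rev_ord i))%N.

Definition pconj (a m : nat) (t : 'I_a -> nat) : 'I_m -> nat :=
  fun j => #|[pred i : 'I_a | (j.+1 <= t i)%N]|.

Definition phat (a b : nat) (t : 'I_a -> nat) : 'I_b -> nat :=
  pconj a b (pcompl a b t).

Definition psize (n : nat) (t : 'I_n -> nat) : nat := (\sum_(i < n) t i)%N.

Definition wedge_index (a b l : nat) (t : 'I_a -> nat) : 'I_(a + b) -> int :=
  fun i => match split i with
           | inl i' => (t i' + l)%N%:Z - b%:Z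
           | inr j => (phat a b t j + l)%N%:Z
           end.

(* Main.v *)
Require Import Defs.
From HB Require Import structures.
From mathcomp Require Import all_boot all_order all_algebra all_fingroup.
From mathcomp Require Import zify ring lra.
Import Order.TTheory GRing.Theory Num.Theory.

Lemma card_P a b : #|[pred t : {ffun 'I_a -> 'I_b.+1} | inP a b t]| = 'C(a + b, a).
Proof.
rewrite -card_sorted_tuples.
pose h (u : a.-tuple 'I_b.+1) : {ffun 'I_a -> 'I_b.+1} := [ffun i => tnth u (rev_ord i)].
have hinj : injective h.
  move=> u v /ffunP huv; apply: eq_from_tnth => i.
  by have := huv (rev_ord i); rewrite !ffunE rev_ordK.
rewrite -(card_imset _ hinj); apply: eq_card => t.
rewrite !inE.
have srt (u : a.-tuple 'I_b.+1) : sorted leq (map val u) =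
    [forall i : 'I_a, forall j : 'I_a, (i <= j) ==> (tnth u i <= tnth u j)].
  rewrite sorted_pairwise; last exact: leq_trans.
  apply/(pairwiseP 0)/forallP => [H i|H i j]; rewrite ?size_map ?size_tuple.
    apply/forallP => j; apply/implyP; rewrite leq_eqVlt => /orP[/eqP/val_inj -> //|ij].
    have := H i j; rewrite !inE size_map size_tuple !ltn_ord => /(_ isT isT ij).
    by rewrite !(nth_map ord0) ?size_tuple // -!tnth_nth.

  move=> ia ja ij; move: (H (Ordinal ia)) => /forallP /(_ (Ordinal ja)) /implyP.
  by rewrite !(nth_map ord0) ?size_tuple // !(tnth_nth ord0) /=; apply; apply: ltnW.
apply/idP/imsetP => [|[u]]; last first.
  rewrite inE srt => /forallP Hu ->; apply/forallP => i; apply/forallP => j; apply/implyP => ij.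
  rewrite !ffunE; move: (Hu (rev_ord j)) => /forallP /(_ (rev_ord i)) /implyP; apply.
  by rewrite /= leq_sub2l // ltnS.
move=> /forallP Ht; exists [tuple t (rev_ord i) | i < a].
  rewrite inE srt; apply/forallP => i; apply/forallP => j; apply/implyP => ij.
  rewrite !tnth_mktuple; move: (Ht (rev_ord j)) => /forallP /(_ (rev_ord i)) /implyP; apply.
  by rewrite /= leq_sub2l // ltnS.
by apply/ffunP => i; rewrite ffunE tnth_mktuple rev_ordK.
Qed.

Definition cnt a (tn : 'I_a -> nat) v := #|[pred i : 'I_a | tn i <= v]|.
Arguments cnt {a}.

Lemma card_lt_ord a m : m <= a -> #|[pred j : 'I_a | j < m]| = m.
Proof.
move=> ma; have winj : injective (widen_ord ma) by move=> x y /(congr1 val) => /= /val_inj.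
rewrite -[RHS](card_ord m) -(card_image winj).
apply: eq_card => j; rewrite inE; apply/idP/imageP => [jm|[k _ ->]] //.
by exists (Ordinal jm) => //; apply: val_inj.
by rewrite /= ltn_ord.
Qed.

Lemma cnt_lo a (tn : 'I_a -> nat) (mono : forall i j : 'I_a, i <= j -> tn j <= tn i)
  (i : 'I_a) v : tn i <= v -> a - i <= cnt tn v.
Proof.
move=> hv; have hC : cnt tn v + #|[predC [pred j : 'I_a | tn j <= v]]| = a.
  by rewrite /cnt cardC card_ord.
have : #|[predC [pred j : 'I_a | tn j <= v]]| <= #|[pred j : 'I_a | j < i]|.
  apply: subset_leq_card; apply/subsetP => j; rewrite !inE -ltnNge => vj.
  rewrite ltnNge; apply/negP => ij; have := mono _ _ ij; lia.
rewrite card_lt_ord; [lia | exact: ltnW].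
Qed.
Arguments cnt_lo {a tn} mono {i v}.

Lemma cnt_hi a (tn : 'I_a -> nat) (mono : forall i j : 'I_a, i <= j -> tn j <= tn i)
  (i : 'I_a) v : v < tn i -> cnt tn v <= a - i.+1.
Proof.
move=> hv; have hC : i.+1 + #|[predC [pred j : 'I_a | j < i.+1]]| = a.
  by rewrite -[X in X + _](@card_lt_ord a i.+1) // cardC card_ord.
have : cnt tn v <= #|[predC [pred j : 'I_a | j < i.+1]]|.
  apply: subset_leq_card; apply/subsetP => j; rewrite !inE -leqNgt => vj.
  rewrite ltnNge; apply/negP => ji; have := mono _ _ ji; lia.
lia.
Qed.
Arguments cnt_hi {a tn} mono {i v}.

Lemma cnt_mono a (tn : 'I_a -> nat) v w : v <= w -> cnt tn v <= cnt tn w.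
Proof.
move=> vw; apply: subset_leq_card; apply/subsetP => j; rewrite !inE => h; lia.
Qed.

Lemma cnt_le a (tn : 'I_a -> nat) v : cnt tn v <= a.
Proof. by rewrite -[X in _ <= X](card_ord a); apply: max_card. Qed.

Lemma phatE a b (tn : 'I_a -> nat) (j : 'I_b) : phat a b tn j = cnt tn (b - j.+1).
Proof.
rewrite /phat /pconj /pcompl /cnt -!sum1_card (reindex_inj rev_ord_inj) /=.
apply: eq_bigl => i; rewrite !inE rev_ordK; have := ltn_ord j; lia.
Qed.

Lemma cross_lt a (tn : 'I_a -> nat) (mono : forall i j : 'I_a, i <= j -> tn j <= tn i)
  (i : 'I_a) v : tn i <= v -> tn i + (a - i.+1) < cnt tn v + v.
Proof. move=> h; have := cnt_lo mono h; have := ltn_ord i; lia. Qed.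
Arguments cross_lt {a tn} mono {i v}.

Lemma cross_gt a (tn : 'I_a -> nat) (mono : forall i j : 'I_a, i <= j -> tn j <= tn i)
  (i : 'I_a) v : v < tn i -> cnt tn v + v < tn i + (a - i.+1).
Proof. move=> h; have := cnt_hi mono h; have := ltn_ord i; lia. Qed.
Arguments cross_gt {a tn} mono {i v}.

Definition exv {a} b (tn : 'I_a -> nat) (j : 'I_(a + b)) : nat :=
  match split j with
  | inl i => tn i + (a - i.+1)
  | inr j' => cnt tn (b - j'.+1) + (b - j'.+1)
  end.

Lemma exvA a b tn (i : 'I_a) : exv b tn (lshift b i) = tn i + (a - i.+1).
Proof. by rewrite /exv (unsplitK (inl _ i)). Qed.

Lemma exvB a b tn (j : 'I_b) : exv b tn (rshift a j) = cnt tn (b - j.+1) + (b - j.+1).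
Proof. by rewrite /exv (unsplitK (inr _ j)). Qed.

Lemma exv_lt a b (tn : 'I_a -> nat) (bnd : forall i, tn i <= b) (j : 'I_(a + b)) : exv b tn j < a + b.
Proof.
rewrite /exv; case: splitP => k _.
  by have := bnd k; have := ltn_ord k; lia.
by have := @cnt_le a tn (b - k.+1); have := ltn_ord k; lia.
Qed.
Arguments exv_lt {a b tn} bnd j.

Lemma exvAA a b tn (mono : forall i j : 'I_a, i <= j -> tn j <= tn i) (i j : 'I_a) :
  i < j -> exv b tn (lshift b j) < exv b tn (lshift b i).
Proof. move=> ij; rewrite !exvA; have := mono _ _ (ltnW ij); have := ltn_ord j; lia. Qed.
Arguments exvAA {a} b {tn} mono {i j}.

Lemma exvBB a b tn (i j : 'I_b) :
  i < j -> exv b tn (rshift a j) < exv b tn (rshift a i).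
Proof.
move=> ij; rewrite !exvB; have : b - j.+1 <= b - i.+1 by lia.
move/(@cnt_mono a tn); have := ltn_ord j; lia.
Qed.
Arguments exvBB a {b} tn {i j}.

Lemma exv_inj a b tn (mono : forall i j : 'I_a, i <= j -> tn j <= tn i) :
  injective (exv b tn).
Proof.
have key : forall j j' : 'I_(a + b), j < j' -> exv b tn j != exv b tn j'.
  move=> j j' jj'.
  case: (splitP j) => [i ej|i ej]; case: (splitP j') => [i' ej'|i' ej'].
  - have -> : j = lshift b i by apply: val_inj.
    have -> : j' = lshift b i' by apply: val_inj.
    have ii : i < i' by rewrite -ej -ej'.
    by rewrite neq_ltn (exvAA b mono ii) orbT.
  - have -> : j = lshift b i by apply: val_inj.
    have -> : j' = rshift a i' by apply: val_inj.
    rewrite exvA exvB neq_ltn; case: (leqP (tn i) (b - i'.+1)) => h.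
      by rewrite (cross_lt mono h).
    by rewrite (cross_gt mono h) orbT.
  - by have := ltn_ord i'; lia.
  - have -> : j = rshift a i by apply: val_inj.
    have -> : j' = rshift a i' by apply: val_inj.
    have ii : i < i' by move: jj'; rewrite ej ej'; lia.
    by rewrite neq_ltn (exvBB a tn ii) orbT.
move=> j j' e; apply: val_inj; case: (ltngtP j j') => // h.
  by have := key _ _ h; rewrite e eqxx.
by have := key _ _ h; rewrite e eqxx.
Qed.
Arguments exv_inj {a} b {tn} mono [x1 x2].

Local Open Scope ring_scope.

Lemma sign_perm_sgz (n : nat) (s : 'S_n) :
  ((-1) ^+ s : int) = \prod_(i < n) \prod_(j < n | (i < j)%N) sgz ((s j)%:Z - (s i)%:Z).
Proof.
pose V (f : 'I_n -> nat) := Vandermonde n (\row_j ((f j)%:Z : int)).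
have dV f : \det (V f) = \prod_(i < n) \prod_(j < n | (i < j)%N) ((f j)%:Z - (f i)%:Z).
  by rewrite det_Vandermonde; apply: eq_bigr => i _; apply: eq_bigr => j _; rewrite !mxE.
have hV : V (fun j => s j) = col_perm s (V (fun j => j)).
  by apply/matrixP => i j; rewrite !mxE.
have : \det (V (fun j => s j)) = (-1) ^+ s * \det (V (fun j => j)).
  by rewrite hV col_permE det_mulmx det_perm odd_permV mulrC.
have pos : 0 < \det (V (fun j => j)).
  rewrite dV; apply: prodr_gt0 => i _; apply: prodr_gt0 => j ij.
  by rewrite subr_gt0 ltz_nat.
move/(congr1 (@sgz _)); rewrite sgzM (gtr0_sgz pos) mulr1 dV.
rewrite (big_morph (@sgz _) (@sgzM _) (sgz1 _)) => H.
have -> : ((-1) ^+ s : int) = sgz ((-1) ^+ s : int).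
  by case: (odd_perm s); rewrite ?expr1 ?expr0 ?sgzN ?sgz1.
rewrite -H; apply: eq_bigr => i _.
by rewrite (big_morph (@sgz _) (@sgzM _) (sgz1 _)).
Qed.


Lemma cnt_sum a (tn : 'I_a -> nat) v : cnt tn v = (\sum_(i < a) (tn i <= v : nat))%N.
Proof.
rewrite /cnt -sum1_card big_mkcond /=; apply: eq_bigr => i _; rewrite inE.
by case: (tn i <= v)%N.
Qed.

Lemma sign_exv a b (tn : 'I_a -> nat) (mono : forall i j : 'I_a, (i <= j)%N -> (tn j <= tn i)%N) :
  \prod_(i < a + b) \prod_(j < a + b | (i < j)%N) sgz ((exv b tn i)%:Z - (exv b tn j)%:Z)
  = (-1) ^+ (\sum_(j < b) cnt tn (b - j.+1)) :> int.
Proof.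
have AA (i : 'I_a) : \prod_(j < a | (i < j)%N)
    sgz ((exv b tn (lshift b i))%:Z - (exv b tn (lshift b j))%:Z) = 1.
  apply: big1 => j ij; apply: gtr0_sgz; rewrite subr_gt0 ltz_nat.
  exact: (exvAA b mono ij).
have AB (i : 'I_a) : \prod_(j < b | (i < a + j)%N)
    sgz ((exv b tn (lshift b i))%:Z - (exv b tn (rshift a j))%:Z)
    = \prod_(j < b) (-1) ^+ (tn i <= b - j.+1)%N.
  rewrite (eq_bigl xpredT); last by move=> j /=; have := ltn_ord i; lia.
  apply: eq_bigr => j _; rewrite exvA exvB; case: (leqP (tn i) (b - j.+1)) => h.
    by rewrite expr1; apply: ltr0_sgz; rewrite subr_lt0 ltz_nat (cross_lt mono h).
  by rewrite expr0; apply: gtr0_sgz; rewrite subr_gt0 ltz_nat (cross_gt mono h).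
have BA (i : 'I_b) : \prod_(j < a | (a + i < j)%N)
    sgz ((exv b tn (rshift a i))%:Z - (exv b tn (lshift b j))%:Z) = 1.
  by apply: big1 => j /=; have := ltn_ord j; lia.
have BB (i : 'I_b) : \prod_(j < b | (a + i < a + j)%N)
    sgz ((exv b tn (rshift a i))%:Z - (exv b tn (rshift a j))%:Z) = 1.
  apply: big1 => j /= ij; apply: gtr0_sgz; rewrite subr_gt0 ltz_nat.
  apply: (exvBB a tn); lia.
rewrite big_split_ord /=.
under eq_bigr => i _ do rewrite big_split_ord /= AA AB mul1r.
under [X in _ * X]eq_bigr => i _ do rewrite big_split_ord /= BA BB mulr1.
rewrite big1_eq mulr1.
have -> : (\sum_(j < b) cnt tn (b - j.+1))%N = (\sum_(j < b) \sum_(i < a) (tn i <= b - j.+1 : nat))%N.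
  by apply: eq_bigr => j _; exact: cnt_sum.
rewrite exchange_big /=.
rewrite (big_morph (fun n : nat => (-1) ^+ n : int) (fun m n => exprD (-1) m n) (expr0 _)).
apply: eq_bigr => i _.
by rewrite (big_morph (fun n : nat => (-1) ^+ n : int) (fun m n => exprD (-1) m n) (expr0 _)).
Qed.

Lemma key a b l (tn : 'I_a -> nat)
  (mono : forall i j : 'I_a, (i <= j)%N -> (tn j <= tn i)%N)
  (bnd : forall i, (tn i <= b)%N) :
  (-1) ^+ psize b (phat a b tn) *
  \det (\matrix_(i < a + b, j < a + b)
          fvar (a + b) i ^ (wedge_index a b l tn j + ((a + b).-1 - j)%N%:Z))
  = \det (\matrix_(i < a + b, j < a + b) fvar (a + b) i ^ (l%:Z + ((a + b).-1 - j)%N%:Z)).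
Proof.
pose pf (j : 'I_(a + b)) : 'I_(a + b) := rev_ord (Ordinal (exv_lt bnd j)).
have pinj : injective pf.
  move=> j j' /rev_ord_inj /(congr1 val) /= e; exact: (exv_inj b mono).
pose p := perm pinj.
have pE j : (p j : nat) = (a + b - (exv b tn j).+1)%N by rewrite permE.
set M0 := \matrix_(i, j) fvar (a + b) i ^ (l%:Z + _).
have -> : \matrix_(i < a + b, j < a + b)
    fvar (a + b) i ^ (wedge_index a b l tn j + ((a + b).-1 - j)%N%:Z) = col_perm p M0.
  apply/matrixP => i j; rewrite !mxE pE; congr (_ ^ _).
  have := exv_lt bnd j; rewrite /wedge_index /exv.
  case: splitP => i' ej.
    move=> h; have := ltn_ord i'; have := bnd i'; lia.
  rewrite phatE => h; have := ltn_ord i'; lia.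
rewrite col_permE det_mulmx det_perm odd_permV.
have E2 : (-1) ^+ p = (-1) ^+ (\sum_(j < b) cnt tn (b - j.+1)) :> int.
  rewrite sign_perm_sgz -(@sign_exv a b tn mono); apply: eq_bigr => i _; apply: eq_bigr => j _.
  rewrite !pE; congr sgz; have := exv_lt bnd i; have := exv_lt bnd j; lia.
have psz : psize b (phat a b tn) = (\sum_(j < b) cnt tn (b - j.+1))%N.
  by apply: eq_bigr => j _; exact: phatE.
have ob : odd_perm p = odd (psize b (phat a b tn)).
  by apply: (@signr_inj int); rewrite signr_odd psz.
rewrite -(signr_odd _ (psize _ _)) -ob.
by case: (odd_perm p); rewrite ?expr0 ?expr1 ?mul1r ?mulr1 // mulrN1 mulN1r opprK.
Qed.

Theorem mainTheorem13 (a b l : nat) :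
  \sum_(t : {ffun 'I_a -> 'I_b.+1} | inP a b t)
      (-1) ^+ psize b (phat a b (fun i => nat_of_ord (t i)))
      * schur (a + b) (wedge_index a b l (fun i => nat_of_ord (t i)))
  = 'C(a + b, a)%:R * schur (a + b) (fun _ : 'I_(a + b) => l%:Z).
Proof.
rewrite /schur.
set D := \det (\matrix_(i, j) fvar (a + b) i ^+ _).
set N0 := \det (\matrix_(i, j) fvar (a + b) i ^ ((fun _ => l%:Z) j + _)).
rewrite (eq_bigr (fun _ => N0 / D)); last first.
  move=> t /forallP Ht; rewrite mulrA; congr (_ / _).
  rewrite key //; last by move=> i; rewrite -ltnS.
  by move=> i j ij; have /forallP /(_ j) /implyP := Ht i; apply.
rewrite (eq_bigl (fun t => t \in [pred t | inP a b t])) // sumr_const card_P.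
by rewrite mulr_natl.
Qed.
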